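(* Let $k$ be a finite field of odd characteristic and $b:V\times V\to W$ a non-degenerate Hermitian $k$-bilinear map which is $\perp$-indecomposable. Then for every $x\in\operatorname{Adj}(b)$ the element $x+x^*$ is either invertible or nilpotent. In particular every $x\in\operatorname{Sym}(b)$ is invertible or nilpotent.
   Context: $b$ is Hermitian if $W=b(V,V)$ and $b(u,v)=b(v,u)\theta$ for some $\theta\in\mathrm{GL}(W)$; non-degenerate if $b(u,V)=0=b(V,u)$ implies $u=0$. $\operatorname{Adj}(b)$ is the set of $f\in\operatorname{End}V$ with an (unique) adjoint $f^*\in\operatorname{End}V$ satisfying $b(uf,v)=b(u,vf^* )$ for all $u,v$; $\operatorname{Sym}(b)=\{f\in\operatorname{End}V: b(uf,v)=b(u,vf)\ \forall u,v\}$. $b$ is $\perp$-indecomposable if there is no set $\mathcal{X}\neq\{V\}$ of subspaces, pairwise $b$-orthogonal, generating $V$ with no proper subset generating $V$. *)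

(* Defs.v *)
From HB Require Import structures.
From mathcomp Require Import all_boot all_order all_algebra all_field.
Set Implicit Arguments. Unset Strict Implicit. Unset Printing Implicit Defensive.
Import GRing.Theory.
Local Open Scope ring_scope.

Definition bilin_map (k : fieldType) (V W : vectType k) (b : V -> V -> W) : Prop :=
  (forall (a : k) u1 u2 v, b (a *: u1 + u2) v = a *: b u1 v + b u2 v) /\
  (forall (a : k) u v1 v2, b u (a *: v1 + v2) = a *: b u v1 + b u v2).

Definition lfun_invertible (k : fieldType) (V : vectType k) (f : 'End(V)) : Prop :=
  exists g : 'End(V), (g \o f = \1)%VF /\ (f \o g = \1)%VF.

Definition lfun_nilpotent (k : fieldType) (V : vectType k) (f : 'End(V)) : Prop :=
  exists n : nat, iter n (fun g : 'End(V) => (f \o g)%VF) \1%VF = 0.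

(* W = b(V,V): W is generated (as a k-space) by the values b(u,v). *)
Definition pb_full_image (k : fieldType) (V W : vectType k) (b : V -> V -> W) : Prop :=
  forall U : {vspace W}, (forall u v, b u v \in U) -> U = fullv.

Definition pb_hermitian (k : fieldType) (V W : vectType k) (b : V -> V -> W) : Prop :=
  pb_full_image b /\
  exists theta : 'End(W), lfun_invertible theta /\ forall u v, b u v = theta (b v u).

Definition pb_nondegenerate (k : fieldType) (V W : vectType k) (b : V -> V -> W) : Prop :=
  forall u, (forall v, b u v = 0) -> (forall v, b v u = 0) -> u = 0.

Definition pb_pairwise_orth (k : fieldType) (V W : vectType k) (b : V -> V -> W)
  (X : seq {vspace V}) : Prop :=
  forall U1 U2, U1 \in X -> U2 \in X -> U1 != U2 ->
    forall u v, u \in U1 -> v \in U2 -> b u v = 0.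

Definition pb_generates (k : fieldType) (V : vectType k) (X : seq {vspace V}) : Prop :=
  (\sum_(U <- X) U)%VS = fullv.

Definition pb_perp_indecomposable (k : fieldType) (V W : vectType k) (b : V -> V -> W) : Prop :=
  forall X : seq {vspace V}, uniq X -> pb_pairwise_orth b X -> pb_generates X ->
    (forall Y : seq {vspace V}, {subset Y <= X} -> pb_generates Y -> {subset X <= Y}) ->
    X =i [:: fullv].

(* Main.v *)
Require Import Defs.
From HB Require Import structures.
From mathcomp Require Import all_boot all_order all_algebra all_field.
Import GRing.Theory.
From mathcomp Require Import zify.
Local Open Scope ring_scope.
Section Fit.
Variables (k : fieldType) (V : vectType k) (s : 'End(V)).

Definition P n := iter n (fun g : 'End(V) => (s \o g)%VF) \1%VF.

Lemma PS n : P n.+1 = (s \o P n)%VF. Proof. by []. Qed.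

Lemma PD m n : P (m + n) = (P m \o P n)%VF.
Proof.
elim: m => [|m IH]; first by rewrite add0n comp_lfun1l.
by rewrite addSn !PS IH comp_lfunA.
Qed.

Lemma PSr n : P n.+1 = (P n \o s)%VF.
Proof. by rewrite -addn1 PD /P /= comp_lfun1r. Qed.

Definition fd n := \dim (limg (P n)).

Lemma fd_dec n : (fd n.+1 <= fd n)%N.
Proof.
rewrite /fd PSr limg_comp; apply: dimvS; apply: limgS; exact: subvf.
Qed.

Lemma fd_stab : exists i, fd i.+1 = fd i.
Proof.
have H : forall m, (forall i, (i < m)%N -> (fd i.+1 < fd i)%N) -> (fd m + m <= fd 0)%N.
  elim=> [|m IH] Hl; first by rewrite addn0.
  have := IH (fun i Hi => Hl i (ltnW Hi)).
  have := Hl m (ltnSn m). lia.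
case: (boolP [exists i : 'I_(fd 0).+2, fd i.+1 == fd i]).
  by case/existsP=> i /eqP; exists i.
move/existsPn=> Hn; exfalso.
have : (fd (fd 0).+1 + (fd 0).+1 <= fd 0)%N.
  apply: H => i Hi; rewrite ltn_neqAle fd_dec andbT.
  exact: (Hn (Ordinal (ltnW Hi : (i < (fd 0).+2)%N))).
lia.
Qed.

Lemma limg_sub n : (limg (P n.+1) <= limg (P n))%VS.
Proof. by rewrite PSr limg_comp; apply: limgS; exact: subvf. Qed.

Lemma fitting : exists n, (0 < n)%N /\ (lker (P n) + limg (P n) = fullv)%VS.
Proof.
have [i Hi] := fd_stab.
have Ei : limg (P i.+1) = limg (P i).
  apply/eqP; rewrite eqEdim limg_sub /=; by move: Hi; rewrite /fd => ->.
have Ej : forall j, limg (P (j + i)) = limg (P i).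
  elim=> [|j IH] //; by rewrite addSn PS limg_comp IH -limg_comp -PS.
exists i.+1; split => //.
have E2 : limg (P (i.+1 + i.+1)) = limg (P i.+1).
  by rewrite addnS -addSn Ej Ei.
have Hc : \dim (limg (P i.+1) :&: lker (P i.+1)) = 0%N.
  have := limg_ker_dim (P i.+1) (limg (P i.+1)).
  rewrite -limg_comp -PD E2. lia.
apply/eqP; rewrite eqEdim subvf /=.
have := dimv_sum_cap (lker (P i.+1)) (limg (P i.+1)).
have := limg_ker_dim (P i.+1) fullv.
rewrite capfv capvC Hc.
rewrite -PS. lia.
Qed.
End Fit.
Arguments P {k V} s n.
Arguments fitting {k V} s.

Lemma selfadj_dich (k : fieldType) (V W : vectType k) (b : V -> V -> W) (s : 'End(V)) :
  bilin_map b -> pb_perp_indecomposable b -> (forall u v, b (s u) v = b u (s v)) ->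
  lfun_invertible s \/ lfun_nilpotent s.
Proof.
move=> [Bl Br] Hind Hs.
have b0l : forall v, b 0 v = 0.
  move=> v; have := Bl 1 0 0 v; rewrite !scale1r addr0 => H.
  by apply: (addrI (b 0 v)); rewrite addr0 -H.
have b0r : forall v, b v 0 = 0.
  move=> v; have := Br 1 v 0 0; rewrite !scale1r addr0 => H.
  by apply: (addrI (b v 0)); rewrite addr0 -H.
have HP : forall n u v, b (P s n u) v = b u (P s n v).
  elim=> [|n IH] u v; first by rewrite /P /= !id_lfunE.
  by rewrite PS comp_lfunE Hs IH -PS PSr comp_lfunE.
have [n [n0 Hfit]] := fitting s.
set K := lker (P s n) in Hfit *. set I := limg (P s n) in Hfit *.
case: (eqVneq K fullv) => HK.
  right; exists n; apply/lfunP => u; rewrite zero_lfunE.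
  have : u \in K by rewrite HK memvf.
  by rewrite /K memv_ker => /eqP.
case: (eqVneq I fullv) => HI.
  left.
  have Hls : limg s = fullv.
    have Hsub : (I <= limg s)%VS.
      rewrite /I; case: n n0 {Hfit K HK I HI} => // n _.
      rewrite PS limg_comp; apply: limgS; exact: subvf.
    apply/eqP; rewrite eqEdim subvf /=; move: (dimvS Hsub); by rewrite HI.
  have Hk : lker s == 0%VS.
    have := limg_ker_dim s fullv; rewrite capfv Hls -dimv_eq0; lia.
  by exists (s^-1)%VF; split; [exact: lker0_compVf | exact: lker0_compfV].
have Hsum : forall (Y : seq {vspace V}) U, (forall Z, Z \in Y -> (Z <= U)%VS) ->
    (\sum_(Z <- Y) Z <= U)%VS.
  elim=> [|Z Y IH] U H; first by rewrite big_nil sub0v.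
  rewrite big_cons subv_add H ?mem_head //= IH // => Z' HZ'.
  by apply: H; rewrite in_cons HZ' orbT.
have HKI : K != I.
  apply/eqP => EKI; move: HK; by rewrite -Hfit -EKI addvv eqxx.
exfalso.
have HX : [:: K; I] =i [:: fullv].
apply: Hind.
- by rewrite /= inE HKI.
- move=> U1 U2; rewrite !inE => /orP[]/eqP-> /orP[]/eqP->; rewrite ?eqxx // => _ u v Hu Hv.
  + move: Hv => /memv_imgP [w _ ->]; rewrite -HP.
    by move: Hu; rewrite /K memv_ker => /eqP ->.
  + move: Hu => /memv_imgP [w _ ->]; rewrite HP.
    by move: Hv; rewrite /K memv_ker => /eqP ->.
- by rewrite /pb_generates !big_cons big_nil addv0.
- move=> Y HY HG U; rewrite !inE => /orP[]/eqP->.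
  + case: (boolP (K \in Y)) => // HKY; exfalso.
    have : (fullv <= I)%VS.
      rewrite -HG; apply: Hsum => Z HZ; have := HY Z HZ.
      rewrite !inE => /orP[]/eqP EZ; last by rewrite EZ.
      by move: HZ; rewrite EZ => HZ; rewrite HZ in HKY.
    move=> Hf; move/eqP: HI; apply; apply/eqP; rewrite eqEdim subvf /=.
    exact: dimvS.
  + case: (boolP (I \in Y)) => // HIY; exfalso.
    have : (fullv <= K)%VS.
      rewrite -HG; apply: Hsum => Z HZ; have := HY Z HZ.
      rewrite !inE => /orP[]/eqP EZ; first by rewrite EZ.
      by move: HZ; rewrite EZ => HZ; rewrite HZ in HIY.
    move=> Hf; move/eqP: HK; apply; apply/eqP; rewrite eqEdim subvf /=.
    exact: dimvS.
have := HX K; rewrite !inE eqxx /= => E.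
  by rewrite -E in HK.
Qed.

Theorem lemma4p33 (k : finFieldType) (V W : vectType k) (b : V -> V -> W) :
  (2%:R : k) != 0 ->
  bilin_map b -> pb_nondegenerate b -> pb_hermitian b -> pb_perp_indecomposable b ->
  (forall x xs : 'End(V), (forall u v, b (x u) v = b u (xs v)) ->
     lfun_invertible (x + xs) \/ lfun_nilpotent (x + xs)) /\
  (forall f : 'End(V), (forall u v, b (f u) v = b u (f v)) ->
     lfun_invertible f \/ lfun_nilpotent f).
Proof.
move=> _ Hb _ [_ [th [_ Hth]]] Hind.
split; last by move=> f Hf; exact: (@selfadj_dich _ _ _ b f Hb Hind Hf).
move=> x xs Hx; apply: (@selfadj_dich _ _ _ b _ Hb Hind) => u v.
have [Bl Br] := Hb.
have Badd : forall u1 u2 v, b (u1 + u2) v = b u1 v + b u2 v.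
  move=> w1 w2 w3; have := Bl 1 w1 w2 w3; by rewrite !scale1r.
have Baddr : forall u v1 v2, b u (v1 + v2) = b u v1 + b u v2.
  move=> w1 w2 w3; have := Br 1 w1 w2 w3; by rewrite !scale1r.
rewrite !add_lfunE Badd Baddr Hx addrC; congr (_ + _).
by rewrite Hth -Hx -Hth.
Qed.
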